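(* Let $(G,\Lambda)$ be a self-similar action with $|\Lambda^0|<\infty$. Then for every cycline triple $(\mu,g,\nu)$, one has $s_\mu s_\mu^*=s_\nu s_\nu^*$ in $\mathcal{O}_{G,\Lambda}$.
   Context: Let $k\ge1$. A $k$-graph is a countable small category $\Lambda$ together with a functor $d:\Lambda\to\mathbb{N}^k$ (the degree map) with the unique factorization property: for every $\mu\in\Lambda$ and $m,n\in\mathbb{N}^k$ with $d(\mu)=m+n$ there are unique $\alpha,\beta\in\Lambda$ with $d(\alpha)=m$, $d(\beta)=n$ and $\mu=\alpha\beta$. Write $\Lambda^n=d^{-1}(n)$; $\Lambda^0$ is identified with the set of objects (vertices), and $r,s$ denote range and source. For $v\in\Lambda^0$ and $n\in\mathbb{N}^k$ write $v\Lambda^n=r^{-1}(v)\cap\Lambda^n$. All $k$-graphs are assumed row-finite ($|v\Lambda^n|<\infty$) and source-free ($v\Lambda^n\neq\emptyset$) for all $v,n$. Infinite paths: let $\Omega_k=\{(p,q)\in\mathbb{N}^k\times\mathbb{N}^k:p\le q\}$ with $r(p,q)=(p,p)$, $s(p,q)=(q,q)$, $(p,q)(q,m)=(p,m)$, $d(p,q)=q-p$. An infinite path is a degree-preserving functor $x:\Omega_k\to\Lambda$; $\Lambda^\infty$ is the set of infinite paths, $v\Lambda^\infty=\{x:x(0,0)=v\}$, and for $\mu\in\Lambda$, $x\in s(\mu)\Lambda^\infty$, $\mu x$ is the unique infinite path $y$ with $y(0,d(\mu))=\mu$ and $y(d(\mu)+p,d(\mu)+q)=x(p,q)$ for all $p\le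 q$. Self-similar actions: $G$ is a countable discrete group. A self-similar action $(G,\Lambda)$ consists of an action of $G$ on $\Lambda$ by automorphisms (bijections preserving $d$, $r$, $s$), written $g\cdot\mu$, and a restriction map $G\times\Lambda\to G$, $(g,\mu)\mapsto g|_\mu$, such that for all $g,h\in G$, $v\in\Lambda^0$ and $\mu,\nu$ with $s(\mu)=r(\nu)$: $g\cdot(\mu\nu)=(g\cdot\mu)(g|_\mu\cdot\nu)$; $g|_v=g$; $g|_{\mu\nu}=(g|_\mu)|_\nu$; $1_G|_\mu=1_G$; $(gh)|_\mu=g|_{h\cdot\mu}\,h|_\mu$. For $x\in\Lambda^\infty$, $(g\cdot x)(p,q)=g|_{x(0,p)}\cdot x(p,q)$. Cycline triples: a triple $(\mu,g,\nu)\in\Lambda\times G\times\Lambda$ with $s(\mu)=g\cdot s(\nu)$ is cycline if $\mu(g\cdot x)=\nu x$ for all $x\in s(\nu)\Lambda^\infty$. The algebra: for a self-similar action with $|\Lambda^0|<\infty$, $\mathcal{O}_{G,\Lambda}$ is the universal unital C*-algebra generated by unitaries $\{u_g\}_{g\in G}$ and partial isometries $\{s_\mu\}_{\mu\in\Lambda}$ such that $\{s_v\}_{v\in\Lambda^0}$ are mutually orthogonal projections; $s_{\mu\nu}=s_\mu s_\nu$ when $s(\mu)=r(\nu)$; $s_\mu^*s_\mu=s_{s(\mu)}$; $s_v=\sum_{\mu\in v\Lambda^n}s_\mu s_\mu^*$ for all $v\in\Lambda^0$, $n\in\mathbb{N}^k$; $u_{gh}=u_gu_h$; and $u_gs_\mu=s_{g\cdot\mu}u_{g|_\mu}$.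 *)

(* Defs.v *)
From HB Require Import structures.
From mathcomp Require Import all_boot all_order all_algebra.
Set Implicit Arguments. Unset Strict Implicit. Unset Printing Implicit Defensive.
Import GRing.Theory.

Definition deg (k : nat) := {ffun 'I_k -> nat}.
Definition dzero k : deg k := [ffun _ => 0%N].
Definition dadd k (m n : deg k) : deg k := [ffun i => (m i + n i)%N].
Definition dsub k (m n : deg k) : deg k := [ffun i => (m i - n i)%N].
Definition dle k (m n : deg k) : bool := [forall i, (m i <= n i)%N].

(* A countable small category (objects kobj, morphisms kpath, total composition
   kcomp which is only meaningful on composable pairs) with a degree functor
   satisfying the unique factorization property.  Row-finiteness is witnessed by
   an enumeration k_enum v n of v Lambda^n; source-freeness says it is nonempty. *)
Record kgraph (k : nat) := KGraph {
  kobj : countType;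
  kpath : countType;
  krng : kpath -> kobj;
  ksrc : kpath -> kobj;
  kid : kobj -> kpath;
  kcomp : kpath -> kpath -> kpath;
  kdeg : kpath -> deg k;
  k_rid : forall v, krng (kid v) = v;
  k_sid : forall v, ksrc (kid v) = v;
  k_rcomp : forall m n, ksrc m = krng n -> krng (kcomp m n) = krng m;
  k_scomp : forall m n, ksrc m = krng n -> ksrc (kcomp m n) = ksrc n;
  k_idl : forall m, kcomp (kid (krng m)) m = m;
  k_idr : forall m, kcomp m (kid (ksrc m)) = m;
  k_assoc : forall a b c, ksrc a = krng b -> ksrc b = krng c ->
      kcomp (kcomp a b) c = kcomp a (kcomp b c);
  k_deg_id : forall v, kdeg (kid v) = dzero k;
  k_deg_comp : forall a b, ksrc a = krng b -> kdeg (kcomp a b) = dadd (kdeg a) (kdeg b);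
  k_fact_ex : forall mu m n, kdeg mu = dadd m n ->
      exists a b, [/\ kdeg a = m, kdeg b = n, ksrc a = krng b & mu = kcomp a b];
  k_fact_uniq : forall a b a' b', kdeg a = kdeg a' -> kdeg b = kdeg b' ->
      ksrc a = krng b -> ksrc a' = krng b' -> kcomp a b = kcomp a' b' ->
      a = a' /\ b = b';
  k_enum : kobj -> deg k -> seq kpath;
  k_enum_uniq : forall v n, uniq (k_enum v n);
  k_enum_mem : forall v n mu, (mu \in k_enum v n) = (krng mu == v) && (kdeg mu == n);
  k_source_free : forall v n, k_enum v n != [::]
}.

Record cgroup := CGroup {
  gcar : countType;
  gmul : gcar -> gcar -> gcar;
  gone : gcar;
  ginv : gcar -> gcar;
  gmulA : forall a b c, gmul a (gmul b c) = gmul (gmul a b) c;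
  gmul1 : forall a, gmul a gone = a;
  g1mul : forall a, gmul gone a = a;
  gmulV : forall a, gmul a (ginv a) = gone;
  gVmul : forall a, gmul (ginv a) a = gone
}.

(* Vertices are identified with the identity morphisms kid v; the action of g on a
   vertex v is sact g (kid v). *)
Record ssaction k (L : kgraph k) (G : cgroup) := SSAction {
  sact : gcar G -> kpath L -> kpath L;
  sres : gcar G -> kpath L -> gcar G;
  sact_bij : forall g, bijective (sact g);
  sact_deg : forall g m, kdeg (sact g m) = kdeg m;
  sact_rng : forall g m, kid (krng (sact g m)) = sact g (kid (krng m));
  sact_src : forall g m, kid (ksrc (sact g m)) = sact g (kid (ksrc m));
  sact_one : forall m, sact (gone G) m = m;
  sact_mul : forall g h m, sact (gmul g h) m = sact g (sact h m);
  ss_act_comp : forall g m n, ksrc m = krng n ->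
      sact g (kcomp m n) = kcomp (sact g m) (sact (sres g m) n);
  ss_res_vert : forall g v, sres g (kid v) = g;
  ss_res_comp : forall g m n, ksrc m = krng n ->
      sres g (kcomp m n) = sres (sres g m) n;
  ss_res_one : forall m, sres (gone G) m = gone G;
  ss_res_mul : forall g h m, sres (gmul g h) m = gmul (sres g (sact h m)) (sres h m)
}.

Section InfPaths.
Variables (k : nat) (L : kgraph k) (G : cgroup) (A : ssaction L G).

(* infinite paths: degree-preserving functors Omega_k -> L, given by their values
   x p q on pairs p <= q (values at other pairs are irrelevant) *)
Definition infpath (x : deg k -> deg k -> kpath L) : Prop :=
  (forall p q, dle p q -> kdeg (x p q) = dsub q p) /\
  (forall p q m, dle p q -> dle q m ->
      ksrc (x p q) = krng (x q m) /\ kcomp (x p q) (x q m) = x p m).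

Definition infpath_from (v : kobj L) (x : deg k -> deg k -> kpath L) : Prop :=
  infpath x /\ x (dzero k) (dzero k) = kid v.

Definition infpath_eq (x y : deg k -> deg k -> kpath L) : Prop :=
  forall p q, dle p q -> x p q = y p q.

Definition gact_inf (g : gcar G) (x : deg k -> deg k -> kpath L) :=
  fun p q => sact A (sres A g (x (dzero k) p)) (x p q).

Definition is_concat (mu : kpath L) (x y : deg k -> deg k -> kpath L) : Prop :=
  [/\ infpath y, y (dzero k) (kdeg mu) = mu &
      forall p q, dle p q -> y (dadd (kdeg mu) p) (dadd (kdeg mu) q) = x p q].

Definition cycline (mu : kpath L) (g : gcar G) (nu : kpath L) : Prop :=
  kid (ksrc mu) = sact A g (kid (ksrc nu)) /\
  forall x, infpath_from (ksrc nu) x ->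
    forall y1 y2, is_concat mu (gact_inf g x) y1 -> is_concat nu x y2 ->
      infpath_eq y1 y2.

Local Open Scope ring_scope.

Definition is_star (R : pzRingType) (star : R -> R) : Prop :=
  [/\ involutive star, forall a b, star (a + b) = star a + star b,
      forall a b, star (a * b) = star b * star a & star 1 = 1].

Record OGL_rep (R : pzRingType) (star : R -> R)
    (u : gcar G -> R) (s : kpath L -> R) : Prop := {
  rep_unitary_l : forall g, u g * star (u g) = 1;
  rep_unitary_r : forall g, star (u g) * u g = 1;
  rep_pisom : forall m, s m * star (s m) * s m = s m;
  rep_proj_sa : forall v, star (s (kid v)) = s (kid v);
  rep_proj_idem : forall v, s (kid v) * s (kid v) = s (kid v);
  rep_proj_orth : forall v w, v != w -> s (kid v) * s (kid w) = 0;
  rep_comp : forall m n, ksrc m = krng n -> s (kcomp m n) = s m * s n;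
  rep_src : forall m, star (s m) * s m = s (kid (ksrc m));
  rep_CK : forall v n, s (kid v) = \sum_(m <- k_enum v n) s m * star (s m);
  rep_umul : forall g h, u (gmul g h) = u g * u h;
  rep_ss : forall g m, u g * s m = s (sact A g m) * u (sres A g m)
}.

End InfPaths.

(* Main.v *)
Require Import Defs.
From HB Require Import structures.
From mathcomp Require Import all_boot all_order all_algebra.
From Stdlib Require Import ClassicalEpsilon.
Set Implicit Arguments. Unset Strict Implicit. Unset Printing Implicit Defensive.
Import GRing.Theory.

Section Deg.
Variable k : nat.
Implicit Types m n p q : deg k.
Lemma dadd_cancel m a b : dadd m a = dadd m b -> a = b.
Proof. move=> H; apply/ffunP=> i; move/ffunP: H => /(_ i); rewrite !ffunE; apply: addnI. Qed.
Lemma dle_dadd m n : dle m n -> n = dadd m (dsub n m).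
Proof. move/forallP=> H; apply/ffunP=> i; rewrite !ffunE subnKC //. Qed.
Lemma dadd0r m : dadd m (dzero k) = m.
Proof. by apply/ffunP=> i; rewrite !ffunE addn0. Qed.
Lemma dadd0l m : dadd (dzero k) m = m.
Proof. by apply/ffunP=> i; rewrite !ffunE. Qed.
Lemma dsub0 m : dsub m (dzero k) = m.
Proof. by apply/ffunP=> i; rewrite !ffunE subn0. Qed.
Lemma daddC m n : dadd m n = dadd n m.
Proof. by apply/ffunP=> i; rewrite !ffunE addnC. Qed.
Lemma daddA m n p : dadd m (dadd n p) = dadd (dadd m n) p.
Proof. by apply/ffunP=> i; rewrite !ffunE addnA. Qed.
Lemma dle_addr m n : dle m (dadd m n).
Proof. by apply/forallP=> i; rewrite !ffunE leq_addr. Qed.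
Lemma dle_refl m : dle m m.
Proof. by apply/forallP. Qed.
Lemma dle0 m : dle (dzero k) m.
Proof. by apply/forallP=> i; rewrite ffunE. Qed.
Lemma dle_trans m n p : dle m n -> dle n p -> dle m p.
Proof. move=> /forallP H1 /forallP H2; apply/forallP=> i; exact: leq_trans (H1 i) (H2 i). Qed.
Lemma dle_add2l m p q : dle p q -> dle (dadd m p) (dadd m q).
Proof. move=> /forallP H; apply/forallP=> i; rewrite !ffunE leq_add2l; exact: H. Qed.
Definition dsum q := (\sum_(i < k) q i)%N.
Definition dconst (n : nat) : deg k := [ffun _ => n].
Lemma dsum_mono p q : dle p q -> (dsum p <= dsum q)%N.
Proof. move=> /forallP H; apply: leq_sum => i _; exact: H. Qed.
Lemma dle_dsum b q : dle q (dadd b (dconst (dsum q))).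
Proof.
apply/forallP=> i; rewrite !ffunE; apply: leq_trans (leq_addl _ _).
rewrite /dsum (bigD1 i) //=; exact: leq_addr.
Qed.
Lemma dconstS b (j : nat) : dadd (dadd b (dconst j)) (dconst 1) = dadd b (dconst j.+1).
Proof. by apply/ffunP=> i; rewrite !ffunE addn1 addnS. Qed.
Lemma dconst0 b : dadd b (dconst 0) = b.
Proof. by apply/ffunP=> i; rewrite !ffunE addn0. Qed.
End Deg.
Section Graph.
Variables (k : nat) (L : kgraph k).
Notation kp := (kpath L).

Definition fact (lam : kp) (m : deg k) : kp * kp :=
  epsilon (inhabits (lam, lam))
    (fun ab => [/\ kdeg ab.1 = m, ksrc ab.1 = krng ab.2 & lam = kcomp ab.1 ab.2]).

Lemma fact_eq (a b : kp) : ksrc a = krng b -> fact (kcomp a b) (kdeg a) = (a, b).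
Proof.
move=> hab; rewrite /fact.
set P := (fun ab : kp * kp => _).
have : P (epsilon (inhabits (kcomp a b, kcomp a b)) P).
  by apply: epsilon_spec; exists (a, b); split.
case: (epsilon _ P) => a' b' [/= ha' hab' he].
have hd : kdeg b = kdeg b'.
  apply: (@dadd_cancel _ (kdeg a)).
  by rewrite -k_deg_comp // he k_deg_comp // ha'.
by case: (k_fact_uniq (esym ha') hd hab hab' he) => -> ->.
Qed.

Definition pre (a lam : kp) := exists w, ksrc a = krng w /\ lam = kcomp a w.

Lemma kid_inj (v w : kobj L) : kid v = kid w -> v = w.
Proof. by move=> h; rewrite -(k_rid v) h k_rid. Qed.

Lemma pre_refl a : pre a a.
Proof. by exists (kid (ksrc a)); rewrite k_rid k_idr. Qed.

Lemma pre_trans a b c : pre a b -> pre b c -> pre a c.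
Proof.
move=> [w [h1 ->]] [w' [h2 ->]]; exists (kcomp w w').
rewrite k_rcomp //; last by rewrite -h2 k_scomp.
split=> //; rewrite k_assoc //; by rewrite -h2 k_scomp.
Qed.

Lemma pre_deg a lam : pre a lam -> dle (kdeg a) (kdeg lam).
Proof. by move=> [w [h ->]]; rewrite k_deg_comp // dle_addr. Qed.

Lemma pre_rng a lam : pre a lam -> krng lam = krng a.
Proof. by move=> [w [h ->]]; rewrite k_rcomp. Qed.

Lemma pre_uniq a a' lam : pre a lam -> pre a' lam -> kdeg a = kdeg a' -> a = a'.
Proof.
move=> [w [h ->]] [w' [h' e]] hd.
have hw : kdeg w = kdeg w'.
  apply: (@dadd_cancel _ (kdeg a)).
  by rewrite -k_deg_comp // e k_deg_comp // hd.
by case: (k_fact_uniq hd hw h h' e).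
Qed.

Lemma split_at (lam : kp) m : dle m (kdeg lam) ->
  exists a b, [/\ kdeg a = m, ksrc a = krng b & lam = kcomp a b].
Proof.
move=> hm; have := dle_dadd hm => e.
by case: (k_fact_ex e) => a [b [h1 h2 h3 h4]]; exists a, b.
Qed.

Lemma pre_sub a b lam : pre a lam -> pre b lam -> dle (kdeg a) (kdeg b) -> pre a b.
Proof.
move=> ha hb hd; case: (split_at hd) => a1 [b1 [h1 h2 e]].
have ha1 : pre a1 lam.
  apply: pre_trans hb; exists b1; by split.
by rewrite (pre_uniq ha (pre_trans (ex_intro _ b1 (conj h2 e)) hb) (esym h1)) ; exists b1.
Qed.

Lemma deg0_kid (lam : kp) : kdeg lam = dzero k -> lam = kid (krng lam).
Proof.
move=> h.
have e1 : kcomp (kid (krng lam)) lam = kcomp lam (kid (ksrc lam)) by rewrite k_idl k_idr.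
case: (k_fact_uniq _ _ _ _ e1) => //.
- by rewrite k_deg_id h.
- by rewrite k_deg_id h.
- by rewrite k_sid.
- by rewrite k_rid.
Qed.

Definition path_of (Y : deg k -> kp) (p q : deg k) : kp := (fact (Y q) p).2.

Lemma path_of0 Y q : path_of Y (dzero k) q = Y q.
Proof.
rewrite /path_of -{1}(k_idl (Y q)) -(k_deg_id (krng (Y q))) fact_eq //.
by rewrite k_sid.
Qed.

Definition coherent (Y : deg k -> kp) :=
  (forall q, kdeg (Y q) = q) /\ (forall q q', dle q q' -> pre (Y q) (Y q')).

Lemma path_of_inf Y : coherent Y -> infpath (path_of Y).
Proof.
move=> [hd hc]; split.
- move=> p q hpq; rewrite /path_of.
  have : dle p (kdeg (Y q)) by rewrite hd.
  move/split_at => [a [b [ha hab e]]].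
  rewrite e -ha fact_eq //=.
  apply: (@dadd_cancel _ (kdeg a)); rewrite -k_deg_comp // -e hd ha.
  exact: dle_dadd.
- move=> p q m hpq hqm; rewrite /path_of.
  have : dle p (kdeg (Y q)) by rewrite hd.
  move/split_at => [a [b [ha hab e]]].
  have [c [hc1 hc2]] := hc _ _ hqm.
  have hbc : ksrc b = krng c by rewrite -hc1 e k_scomp.
  have E1 : (fact (Y m) q).2 = c by rewrite hc2 -{2}(hd q) fact_eq.
  have E2 : (fact (Y q) p).2 = b by rewrite e -ha fact_eq.
  have E3 : (fact (Y m) p).2 = kcomp b c.
    by rewrite hc2 e k_assoc // -ha fact_eq // k_rcomp.
  by rewrite E1 E2 E3.
Qed.
End Graph.
Section Inf.
Variables (k : nat) (L : kgraph k).
Notation kp := (kpath L).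

Lemma fact1_pre (lam : kp) q : dle q (kdeg lam) ->
  kdeg (fact lam q).1 = q /\ pre (fact lam q).1 lam.
Proof.
move/split_at => [a [b [ha hab ->]]]; rewrite -ha fact_eq //=; split=> //.
by exists b.
Qed.

Lemma sys (Lam : deg k -> kp) :
  (forall q, dle q (kdeg (Lam q))) ->
  (forall q q', dle q q' -> pre (Lam q) (Lam q')) ->
  coherent (fun q => (fact (Lam q) q).1) /\ (forall q, pre (fact (Lam q) q).1 (Lam q)).
Proof.
move=> h1 h2.
have H q := fact1_pre (h1 q).
split; last by move=> q; case: (H q).
split; first by move=> q; case: (H q).
move=> q q' hq; case: (H q) => d1 p1; case: (H q') => d2 p2.
apply: pre_sub p2 _; first exact: pre_trans p1 (h2 _ _ hq).
by rewrite d1 d2.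
Qed.

Lemma inf_rng v (x : deg k -> deg k -> kp) : infpath_from v x -> forall q, krng (x (dzero k) q) = v.
Proof.
move=> [[hd hc] h0] q.
have [e _] := hc _ _ q (dle_refl _) (dle0 q).
by rewrite -e h0 k_sid.
Qed.

Lemma inf_deg0 (x : deg k -> deg k -> kp) : infpath x -> forall q, kdeg (x (dzero k) q) = q.
Proof. by move=> [hd _] q; rewrite hd ?dle0 // dsub0. Qed.

Lemma inf_pre (x : deg k -> deg k -> kp) : infpath x -> forall p q, dle p q ->
  ksrc (x (dzero k) p) = krng (x p q) /\ x (dzero k) q = kcomp (x (dzero k) p) (x p q).
Proof. by move=> [_ hc] p q hpq; have [e1 e2] := hc _ _ _ (dle0 p) hpq. Qed.

Lemma concat_ex (mu : kp) x : infpath_from (ksrc mu) x -> exists y, is_concat mu x y.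
Proof.
move=> hx; have [hxi hx0] := hx.
have hr := inf_rng hx.
pose Lam q := kcomp mu (x (dzero k) q).
have hL1 q : dle q (kdeg (Lam q)).
  by rewrite /Lam k_deg_comp ?hr // inf_deg0 // daddC dle_addr.
have hL2 q q' : dle q q' -> pre (Lam q) (Lam q').
  move=> hq; have [e1 e2] := inf_pre hxi hq.
  exists (x q q'); rewrite /Lam k_scomp ?hr //; split=> //.
  by rewrite e2 k_assoc ?hr.
have [hco hpre] := sys hL1 hL2.
set Y := (fun q => _) in hco hpre.
have hY q : Y (dadd (kdeg mu) q) = Lam q.
  apply: pre_uniq (hpre _) _ _.
  - by apply: hL2; rewrite daddC dle_addr.
  - by rewrite hco.1 /Lam k_deg_comp ?hr // inf_deg0.
exists (path_of Y); split.
- exact: path_of_inf.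
- by rewrite path_of0 -{1}(dadd0r (kdeg mu)) hY /Lam hx0 k_idr.
- move=> p q hpq; rewrite /path_of hY /Lam.
  have [e1 e2] := inf_pre hxi hpq.
  have hd : dadd (kdeg mu) p = kdeg (kcomp mu (x (dzero k) p)).
    by rewrite k_deg_comp ?hr // inf_deg0.
  rewrite e2 -k_assoc ?hr // hd fact_eq //.
  by rewrite k_scomp ?hr.
Qed.

Lemma concat_pre (mu : kp) x y : is_concat mu x y -> forall q,
  y (dzero k) (dadd (kdeg mu) q) = kcomp mu (x (dzero k) q).
Proof.
move=> [hy h0 hs] q.
have [e1 e2] := inf_pre hy (dle_addr (kdeg mu) q).
by rewrite e2 h0 -hs ?dle0 // dadd0r.
Qed.
End Inf.
Section Alg.
Variables (k : nat) (L : kgraph k) (G : cgroup) (A : ssaction L G).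
Variables (R : pzRingType) (star : R -> R) (u : gcar G -> R) (s : kpath L -> R).
Hypotheses (hstar : is_star star) (hrep : OGL_rep A star u s).
Local Open Scope ring_scope.

Lemma s_src m : s m * s (kid (ksrc m)) = s m.
Proof. by rewrite -(rep_src hrep) mulrA (rep_pisom hrep). Qed.

Lemma live_src m : (s m != 0) = (s (kid (ksrc m)) != 0).
Proof.
apply/idP/idP => /eqP h; apply/eqP => h'; apply: h.
- by rewrite -s_src h' mulr0.
- by rewrite -(rep_src hrep) h' mulr0.
Qed.

Lemma live_comp a b : ksrc a = krng b -> (s (kcomp a b) != 0) = (s b != 0).
Proof. by move=> h; rewrite live_src k_scomp // -live_src. Qed.

Lemma live_pre a lam : pre a lam -> s lam != 0 -> s a != 0.
Proof.
move=> [w [h ->]]; rewrite (rep_comp hrep) //.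
by apply: contraNneq => ->; rewrite mul0r.
Qed.

Lemma live_act h b : (s (sact A h b) != 0) = (s b != 0).
Proof.
have E := rep_ss hrep h b.
apply/idP/idP => /eqP H; apply/eqP => H'; apply: H.
- have : s (sact A h b) * u (sres A h b) = 0 by rewrite -E H' mulr0.
  move=> E2; rewrite -[s _]mulr1 -(rep_unitary_l hrep (sres A h b)) mulrA E2 mul0r //.
- have : u h * s b = 0 by rewrite E H' mul0r.
  move=> E2; rewrite -[s b]mul1r -(rep_unitary_r hrep h) -mulrA E2 mulr0 //.
Qed.

Lemma sact_kid g v : sact A g (kid v) = kid (krng (sact A g (kid v))).
Proof. by rewrite sact_rng k_rid. Qed.

Lemma vr h b : s b != 0 -> sact A (sres A h b) (kid (ksrc b)) = kid (ksrc (sact A h b)).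
Proof.
move=> hb.
set h' := sres A h b; set z := sact A h b.
have Ez : s z = s z * s (sact A h' (kid (ksrc b))).
  have E1 := rep_ss hrep h b.
  have E3 := rep_ss hrep h' (kid (ksrc b)).
  rewrite (ss_res_vert A) in E3.
  have : s z * u h' = s z * s (sact A h' (kid (ksrc b))) * u h'.
    by rewrite -E1 -{1}s_src mulrA E1 -mulrA E3 mulrA.
  move=> E4.
  have Eu := rep_unitary_l hrep h'.
  have e : s z = s z * u h' * star (u h') by rewrite -mulrA Eu mulr1.
  by rewrite {1}e E4 -mulrA Eu mulr1.
rewrite sact_kid; apply: f_equal.
case: (eqVneq (krng (sact A h' (kid (ksrc b)))) (ksrc z)) => // hne.
have : s z = 0.
  rewrite -s_src Ez sact_kid -mulrA (rep_proj_orth hrep hne) mulr0 //.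
by move=> H; move: (live_act h b); rewrite -/z H eqxx hb.
Qed.

Lemma ck_live w n : s (kid w) != 0 -> exists e, e \in k_enum w n /\ s e != 0.
Proof.
move=> hw; case: (boolP (has (fun e => s e != 0) (k_enum w n))).
  by move/hasP => [e he1 he2]; exists e.
move/hasPn => H; move: hw; rewrite (rep_CK hrep w n) big1_seq ?eqxx //.
by move=> e [] /H; rewrite negbK => /eqP ->; rewrite mul0r.
Qed.

Lemma gx_inf g v w (x : deg k -> deg k -> kpath L) :
  infpath_from v x -> (forall q, s (x (dzero k) q) != 0) ->
  kid w = sact A g (kid v) -> infpath_from w (gact_inf A g x).
Proof.
move=> hx hl hw; have [[hd hc] h0] := hx; have hxi : infpath x by [].
split; [split|].
- by move=> p q hpq; rewrite /gact_inf sact_deg hd.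
- move=> p q m hpq hqm; rewrite /gact_inf.
  have [e1 e2] := hc _ _ _ hpq hqm.
  have [f1 f2] := inf_pre hxi hpq.
  set h := sres A g (x (dzero k) p).
  have -> : sres A g (x (dzero k) q) = sres A h (x p q).
    by rewrite f2 (ss_res_comp A) .
  have lb : s (x p q) != 0 by rewrite -(live_comp f1) -f2.
  split; last by rewrite -e2 (ss_act_comp A).
  apply: kid_inj; rewrite sact_rng -e1 (vr h lb) //.
- by rewrite /gact_inf h0 (ss_res_vert A) hw.
Qed.

Definition one_deg : deg k := dconst k 1.
Definition next (w : kobj L) : kpath L :=
  head (kid w) [seq e <- k_enum w one_deg | s e != 0].

Lemma next_spec w : s (kid w) != 0 -> next w \in k_enum w one_deg /\ s (next w) != 0.
Proof.
move=> hw; have [e [he1 he2]] := ck_live one_deg hw.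
have : has (fun e => s e != 0) (k_enum w one_deg) by apply/hasP; exists e.
rewrite has_filter /next.
case E: [seq e <- k_enum w one_deg | s e != 0] => [|e' r] //= _.
have : e' \in [seq e <- k_enum w one_deg | s e != 0] by rewrite E mem_head.
by rewrite mem_filter => /andP [-> ->].
Qed.

Fixpoint chain (b : kpath L) (n : nat) : kpath L :=
  if n is n'.+1 then kcomp (chain b n') (next (ksrc (chain b n'))) else b.

Lemma chain_inv b n : s b != 0 ->
  [/\ s (chain b n) != 0, kdeg (chain b n) = dadd (kdeg b) (dconst k n)
    & pre (chain b n) (chain b n.+1)].
Proof.
move=> hb; elim: n => [|n [IH1 IH2 IH3]].
- have [hn1 hn2] := next_spec (w:=ksrc b) ltac:(by rewrite -live_src).
  move: hn1; rewrite k_enum_mem => /andP [/eqP r1 _].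
  by split=> //=; [rewrite dconst0 | exists (next (ksrc b))].
- have [hn1 hn2] := next_spec (w:=ksrc (chain b n)) ltac:(by rewrite -live_src).
  move: hn1; rewrite k_enum_mem => /andP [/eqP r1 /eqP d1].
  have L1 : s (chain b n.+1) != 0 by rewrite /= live_comp.
  have [hm1 hm2] := next_spec (w:=ksrc (chain b n.+1)) ltac:(by rewrite -live_src).
  move: hm1; rewrite k_enum_mem => /andP [/eqP r2 _].
  split=> //.
  + by rewrite /= k_deg_comp // IH2 d1 dconstS.
  + by exists (next (ksrc (chain b n.+1))).
Qed.

Lemma chain_pre b n m : s b != 0 -> (n <= m)%N -> pre (chain b n) (chain b m).
Proof.
move=> hb; elim: m => [|m IH].
  by rewrite leqn0 => /eqP ->; exact: pre_refl.
rewrite leq_eqVlt => /orP [/eqP -> | hnm]; first exact: pre_refl.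
apply: pre_trans (IH hnm) _; by case: (chain_inv m hb).
Qed.

Lemma ext_ex (b : kpath L) : s b != 0 -> exists x, [/\ infpath_from (krng b) x,
  x (dzero k) (kdeg b) = b & forall q, s (x (dzero k) q) != 0].
Proof.
move=> hb.
pose Lam (q : deg k) := chain b (dsum q).
have hL1 q : dle q (kdeg (Lam q)).
  by case: (chain_inv (dsum q) hb) => _ -> _; exact: dle_dsum.
have hL2 q q' : dle q q' -> pre (Lam q) (Lam q').
  by move=> hq; apply: chain_pre => //; exact: dsum_mono.
have [hco hpre] := sys hL1 hL2.
set Y := (fun q => _) in hco hpre.
exists (path_of Y); split.
- split; first exact: path_of_inf.
  rewrite path_of0 (deg0_kid (hco.1 _)) -(pre_rng (hpre _)).
  by rewrite /Lam (pre_rng (chain_pre hb (leq0n _))).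
- rewrite path_of0; apply: pre_uniq (hpre _) _ (hco.1 _).
  exact: (chain_pre (n:=0) hb (leq0n _)).
- move=> q; rewrite path_of0; apply: live_pre (hpre _) _.
  by case: (chain_inv (dsum q) hb).
Qed.

Lemma star_lem mu g nu : cycline A mu g nu -> forall x,
  infpath_from (ksrc nu) x -> (forall q, s (x (dzero k) q) != 0) ->
  kcomp mu (sact A g (x (dzero k) (kdeg nu))) = kcomp nu (x (dzero k) (kdeg mu)).
Proof.
move=> [c1 c2] x hx hl.
have hgx := gx_inf hx hl c1.
have [y1 H1] := concat_ex hgx.
have [y2 H2] := concat_ex hx.
have E := c2 x hx y1 y2 H1 H2 (dzero k) (dadd (kdeg mu) (kdeg nu)) (dle0 _).
move: E; rewrite (concat_pre H1) daddC (concat_pre H2) /gact_inf.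
by case: hx => _ ->; rewrite (ss_res_vert A).
Qed.


Definition F (l : kpath L) := s l * star (s l).

Lemma expand m n : s m * star (s m) = \sum_(a <- k_enum (ksrc m) n) F (kcomp m a).
Proof.
have [h1 _ h3 _] := hstar.
rewrite -{1}s_src (rep_CK hrep _ n) mulr_sumr mulr_suml.
apply: eq_big_seq => a.
rewrite k_enum_mem => /andP [/eqP ha _].
by rewrite /F (rep_comp hrep) // h3 !mulrA.
Qed.

Lemma drop_dead (r : seq (kpath L)) :
  \sum_(l <- r) F l = \sum_(l <- [seq l <- r | s l != 0]) F l.
Proof.
rewrite big_filter [RHS]big_mkcond; apply: eq_bigr => l _.
by case: ifP => // /negbFE /eqP; rewrite /F => ->; rewrite mul0r.
Qed.

Lemma main_sec mu g nu : cycline A mu g nu -> s mu * star (s mu) = s nu * star (s nu).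
Proof.
move=> cyc; have [c1 _] := cyc.
rewrite (expand mu (kdeg nu)) (expand nu (kdeg mu)).
rewrite -(big_map (kcomp mu) xpredT F) -(big_map (kcomp nu) xpredT F).
rewrite drop_dead [RHS]drop_dead; apply: perm_big; apply: uniq_perm.
- rewrite filter_uniq // map_inj_in_uniq ?k_enum_uniq //.
  move=> a a'; rewrite !k_enum_mem => /andP [/eqP r1 /eqP d1] /andP [/eqP r2 /eqP d2] e.
  by case: (k_fact_uniq (erefl _) (etrans d1 (esym d2)) (esym r1) (esym r2) e).
- rewrite filter_uniq // map_inj_in_uniq ?k_enum_uniq //.
  move=> a a'; rewrite !k_enum_mem => /andP [/eqP r1 /eqP d1] /andP [/eqP r2 /eqP d2] e.
  by case: (k_fact_uniq (erefl _) (etrans d1 (esym d2)) (esym r1) (esym r2) e).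
move=> l; rewrite !mem_filter; apply/andP/andP => [[hl /mapP [a ha El]] | [hl /mapP [b hb El]]]; subst l.
- move: (ha); rewrite k_enum_mem => /andP [/eqP r1 /eqP d1].
  have la : s a != 0 by rewrite -(live_comp (esym r1)).
  set b0 := sact A (ginv g) a.
  have lb0 : s b0 != 0 by rewrite live_act.
  have rb0 : krng b0 = ksrc nu.
    apply: kid_inj; rewrite sact_rng r1 c1 -(sact_mul A) gVmul (sact_one A) //.
  have [x [hx hx0 hxl]] := ext_ex lb0.
  rewrite rb0 in hx.
  have E := star_lem cyc hx hxl.
  have db0 : kdeg b0 = kdeg nu by rewrite sact_deg.
  rewrite -db0 hx0 /b0 -(sact_mul A) gmulV (sact_one A) in E.
  split=> //; rewrite E; apply: map_f.
  by rewrite k_enum_mem (inf_rng hx) inf_deg0 ?eqxx //; case: hx.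
- move: (hb); rewrite k_enum_mem => /andP [/eqP r1 /eqP d1].
  have lb : s b != 0 by rewrite -(live_comp (esym r1)).
  have [x [hx hx0 hxl]] := ext_ex lb.
  rewrite r1 in hx.
  have E := star_lem cyc hx hxl.
  rewrite -d1 hx0 in E.
  split=> //; rewrite -E; apply: map_f.
  rewrite k_enum_mem sact_deg inf_deg0 ?eqxx ?andbT; last by case: hx.
  apply/eqP/kid_inj; by rewrite sact_rng (inf_rng hx) c1.
Qed.
End Alg.

Unset Implicit Arguments.
Local Open Scope ring_scope.

Theorem lemma6p9 (k : nat) (hk : (0 < k)%N) (L : kgraph k) (G : cgroup)
    (A : ssaction L G)
    (finV : exists vs : seq (kobj L), forall v, v \in vs)
    (mu : kpath L) (g : gcar G) (nu : kpath L)
    (cyc : cycline A mu g nu)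
    (R : pzRingType) (star : R -> R) (u : gcar G -> R) (s : kpath L -> R)
    (hstar : is_star star) (hrep : OGL_rep A star u s) :
  s mu * star (s mu) = s nu * star (s nu).
Proof. exact: (main_sec hstar hrep cyc). Qed.
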